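(* Let $\Bbbk$ be a field, $S=\Bbbk[x_1,\ldots,x_n]$, $\prec$ a monomial order on $S$, $P=\{p_1,\ldots,p_m\}\subset\Bbbk^n$ distinct points, and $B$ the set of monomials outside $\mathrm{in}_\prec(I(P))$. Let $E=\{x_{i_1},\ldots,x_{i_{\bar n}}\}$ be a subset of the variables with $\mathrm{supp}(B)\subseteq E$, $|E|\le\min(m-1,n)$ and $E(P)$ of rank $|E|$. Let $\pi:\Bbbk^n\to\Bbbk^{\bar n}$, $\pi(a_1,\ldots,a_n)=(a_{i_1},\ldots,a_{i_{\bar n}})$, let $T=\Bbbk[y_{i_1},\ldots,y_{i_{\bar n}}]$ and $\pi^*:T\to S$ the monomorphism $y_{i_j}\mapsto x_{i_j}$. Let $\prec'$ be the monomial order on $T$ with $y^\alpha\prec'y^\beta$ iff $\pi^*(y^\alpha)\prec\pi^*(y^\beta)$, and let $B'$ be the set of monomials outside $\mathrm{in}_{\prec'}(I(\pi(P)))$. Then $\pi^*(B')=B$.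
   Context: $I(Q)$ denotes the vanishing ideal of a finite point set $Q$; $\mathrm{in}_\prec(I)$ is the ideal generated by leading monomials. The support of a set of monomials is the set of variables occurring with positive exponent in some of them. $E(P)$ is the $|E|\times m$ matrix whose rows are the evaluation vectors $(x(p_1),\ldots,x(p_m))$, $x\in E$. *)

(* Defs.v *)
From HB Require Import structures.
From mathcomp Require Import all_boot all_order all_algebra.
From mathcomp Require Export mpoly.
Set Implicit Arguments. Unset Strict Implicit. Unset Printing Implicit Defensive.
Import GRing.Theory.
Local Open Scope ring_scope.

(* A monomial order on exponent vectors 'X_{1..n}: a total order, compatible
   with multiplication of monomials (addition of exponents), with 1 = x^0
   below every monomial (equivalent, by Dickson, to being a well-order). *)
Definition monomial_order n (le : rel 'X_{1..n}) : Prop :=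
  [/\ reflexive le, antisymmetric le, transitive le & total le] /\
  (forall a b c : 'X_{1..n}, le a b -> le (a + c)%MM (b + c)%MM) /\
  (forall a : 'X_{1..n}, le 0%MM a).

Definition is_lead n (K : fieldType) (le : rel 'X_{1..n}) (f : {mpoly K[n]})
    (m : 'X_{1..n}) : bool :=
  (m \in msupp f) && all (fun m' => le m' m) (msupp f).

Definition vanishing_ideal n (K : fieldType) (Q : ('I_n -> K) -> Prop)
    (f : {mpoly K[n]}) : Prop :=
  forall x, Q x -> f.@[x] = 0.

Definition in_initial_ideal n (K : fieldType) (le : rel 'X_{1..n})
    (I : {mpoly K[n]} -> Prop) (q : {mpoly K[n]}) : Prop :=
  exists s : seq ({mpoly K[n]} * 'X_{1..n}),
    (forall gm, gm \in s -> exists f, [/\ I f, f != 0 & is_lead le f gm.2]) /\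
    q = \sum_(gm <- s) gm.1 * 'X_[gm.2].

Definition standard_monomial n (K : fieldType) (le : rel 'X_{1..n})
    (I : {mpoly K[n]} -> Prop) (b : 'X_{1..n}) : Prop :=
  ~ in_initial_ideal le I 'X_[b].

(* E = {x_{i_1},...,x_{i_nbar}} with i_1 < ... < i_nbar; the j-th variable
   y_{i_j} of T corresponds to the ordinal enum_val j of E. *)
Definition sel n (E : {set 'I_n}) (j : 'I_#|E|) : 'I_n := @enum_val _ (mem E) j.

Definition proj_pt n (K : fieldType) (E : {set 'I_n}) (a : 'I_n -> K)
    : 'I_#|E| -> K := fun j => a (sel j).

Definition emb_mon n (E : {set 'I_n}) (b : 'X_{1..#|E|}) : 'X_{1..n} :=
  [multinom (\sum_(j < #|E| | sel j == i) b j)%N | i < n].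

Definition induced_order n (E : {set 'I_n}) (le : rel 'X_{1..n})
    : rel 'X_{1..#|E|} := fun a b => le (emb_mon a) (emb_mon b).

Definition eval_matrix n m (K : fieldType) (E : {set 'I_n})
    (P : 'I_m -> 'I_n -> K) : 'M[K]_(#|E|, m) :=
  \matrix_(i < #|E|, j < m) P j (sel i).

(* Main.v *)
Require Import Defs.
From mathcomp Require Import all_boot all_order all_algebra.
From mathcomp Require Import mpoly.
From mathcomp Require Import ring zify.
From Stdlib Require Import Classical ClassicalEpsilon.
Set Implicit Arguments. Unset Strict Implicit. Unset Printing Implicit Defensive.
Import GRing.Theory.
Local Open Scope ring_scope.

Lemma nat_next (u : nat -> nat) p :
  exists q, (p < q)%N /\ forall r, (p < r)%N -> (u q <= u r)%N.
Proof.
suff H : forall v, (exists n, (p < n)%N /\ (u n <= v)%N) ->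
  exists q, (p < q)%N /\ forall r, (p < r)%N -> (u q <= u r)%N.
  by apply: (H (u p.+1)); exists p.+1.
elim=> [|v IH] [n0 [pn unv]].
  by exists n0; split => // r _; move: unv; rewrite leqn0 => /eqP ->.
case: (classic (exists n', (p < n')%N /\ (u n' <= v)%N)) => [h|h]; first exact: IH.
exists n0; split => // r pr; rewrite leqNgt; apply/negP => lt; apply: h.
exists r; split => //; lia.
Qed.

Lemma nat_monosub (u : nat -> nat) : exists psi : nat -> nat,
  (forall i, (psi i < psi i.+1)%N) /\ (forall i, (u (psi i) <= u (psi i.+1))%N).
Proof.
pose next p := proj1_sig (constructive_indefinite_description _ (nat_next u p)).
have hn p : (p < next p)%N /\ forall r, (p < r)%N -> (u (next p) <= u r)%N.
  exact: (proj2_sig (constructive_indefinite_description _ (nat_next u p))).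
exists (fun i => iter i.+1 next 0%N); split => i.
  by rewrite [X in (_ < X)%N]iterS; case: (hn (iter i.+1 next 0%N)).
rewrite [X in (_ <= u X)%N]iterS iterS.
case: (hn (iter i next 0%N)) => h1 h2; apply: h2.
case: (hn (next (iter i next 0%N))) => h3 _; exact: ltn_trans h1 h3.
Qed.

Lemma dickson_seq n (f : nat -> 'X_{1..n}) :
  exists i j, (i < j)%N /\ (f i <= f j)%MM.
Proof.
suff H : forall k, exists phi : nat -> nat, (forall i, (phi i < phi i.+1)%N) /\
    forall i (t : 'I_n), (t < k)%N -> (f (phi i) t <= f (phi i.+1) t)%N.
  case: (H n) => phi [h1 h2]; exists (phi 0%N), (phi 1%N); split => //.
  by apply/mnm_lepP => t; apply: h2.
elim=> [|k [phi [h1 h2]]]; first by exists id.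
case: (ltnP k n) => kn; last first.
  exists phi; split => // i t tk; apply: h2; exact: (leq_trans (ltn_ord t) kn).
pose t0 := Ordinal kn.
case: (nat_monosub (fun i => f (phi i) t0)) => psi [p1 p2].
exists (fun i => phi (psi i)); split.
  move=> i; apply: (homo_ltn (r := fun a b => (a < b)%N)) => //.
  by move=> y x z; apply: ltn_trans.
move=> i t; rewrite ltnS leq_eqVlt => /orP [/eqP tk|tk].
  have -> : t = t0 by apply: val_inj.
  exact: p2.
apply: (homo_leq (f := fun a => f (phi a) t) (r := fun a b => (a <= b)%N)) => //.
- by move=> y x z; apply: leq_trans.
- by move=> a; apply: h2.
- exact: ltnW.
Qed.

Lemma mo_wf n (le : rel 'X_{1..n}) : monomial_order le ->
  well_founded (fun a b => le a b && (a != b)).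
Proof.
move=> [[Hrefl Hanti Htrans Htot] [Hcomp H0]] c.
apply: NNPP => Hc.
pose lt := fun a b => le a b && (a != b).
have step : forall x : {x | ~ Acc lt x}, exists y : {x | ~ Acc lt x}, lt (proj1_sig y) (proj1_sig x).
  move=> [x hx]; apply: NNPP => hn; apply hx; constructor => y hy.
  apply: NNPP => hy'; apply: hn; by exists (exist _ y hy').
pose nxt x := proj1_sig (constructive_indefinite_description _ (step x)).
have hnxt x : lt (proj1_sig (nxt x)) (proj1_sig x).
  exact: (proj2_sig (constructive_indefinite_description _ (step x))).
pose f i := proj1_sig (iter i nxt (exist _ c Hc)).
have fS i : lt (f i.+1) (f i) by rewrite /f iterS; apply: hnxt.
have fle : forall i d, le (f (i + d)%N) (f i).
  move=> i; elim=> [|d IH]; first by rewrite addn0.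
  rewrite addnS; apply: Htrans IH; by case/andP: (fS (i + d)%N).
case: (dickson_seq f) => i [j [ij hdiv]].
have hle : le (f i) (f j).
  have := Hcomp 0%MM (f j - f i)%MM (f i) (H0 _).
  by rewrite add0m submK.
have : le (f j) (f i.+1).
  by have := fle i.+1 (j - i.+1)%N; rewrite subnKC.
move=> hj; have hii : le (f i) (f i.+1) by exact: Htrans hj.
case/andP: (fS i) => h1 h2.
by move: h2; rewrite (Hanti _ _ (introT andP (conj h1 hii))) eqxx.
Qed.

Lemma emb_sel n (E : {set 'I_n}) (b : 'X_{1..#|E|}) j : emb_mon b (sel j) = b j.
Proof.
rewrite /emb_mon mnmE (bigD1 j) ?eqxx //= big1 ?addn0 // => k /andP [/eqP hk hne].
by move: hne; rewrite (enum_val_inj hk) eqxx.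
Qed.

Lemma emb_out n (E : {set 'I_n}) (b : 'X_{1..#|E|}) i : i \notin E -> emb_mon b i = 0%N.
Proof.
move=> hi; rewrite /emb_mon mnmE big1 // => k /eqP hk.
by move: hi; rewrite -hk /sel enum_valP.
Qed.

Lemma emb_inj n (E : {set 'I_n}) : injective (@emb_mon n E).
Proof. by move=> a b h; apply/mnmP => j; rewrite -!(emb_sel (E:=E)) h. Qed.

Definition unemb n (E : {set 'I_n}) (d : 'X_{1..n}) : 'X_{1..#|E|} :=
  [multinom d (sel j) | j < #|E|].

Lemma unembK n (E : {set 'I_n}) (d : 'X_{1..n}) :
  (forall i, (0 < d i)%N -> i \in E) -> emb_mon (unemb E d) = d.
Proof.
move=> hd; apply/mnmP => i; case: (boolP (i \in E)) => hi.
  by rewrite -(enum_rankK_in hi hi) -/(sel _) emb_sel mnmE.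
rewrite emb_out //; case: (posnP (d i)) => // h.
by move: hi; rewrite hd.
Qed.

Lemma embD n (E : {set 'I_n}) (a c : 'X_{1..#|E|}) :
  emb_mon (a + c)%MM = (emb_mon a + emb_mon c)%MM.
Proof.
apply/mnmP => i; rewrite mnmDE /emb_mon !mnmE -big_split /=.
by apply: eq_bigr => j _; rewrite mnmDE.
Qed.

Lemma eval_emb (K : fieldType) n (E : {set 'I_n}) (c : 'X_{1..#|E|}) (x : 'I_n -> K) :
  ('X_[emb_mon c] : {mpoly K[n]}).@[x] = ('X_[c] : {mpoly K[#|E|]}).@[proj_pt x].
Proof.
rewrite !mevalX (bigID (mem E)) /= [X in _ * X]big1 ?mulr1; last first.
  by move=> i hi; rewrite emb_out // expr0.
rewrite (big_enum_val (A := mem E)) /=; apply: eq_bigr => j _.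
by rewrite -/(sel j) emb_sel.
Qed.

Definition ev (K : fieldType) n m (Q : 'I_m -> 'I_n -> K) (c : 'X_{1..n}) (j : 'I_m) : K :=
  ('X_[c] : {mpoly K[n]}).@[Q j].

Definition inspan (K : fieldType) n m (le : rel 'X_{1..n}) (Q : 'I_m -> 'I_n -> K)
  (b : 'X_{1..n}) : Prop :=
  exists s : seq (K * 'X_{1..n}), (forall x, x \in s -> le x.2 b && (x.2 != b)) /\
    forall j, ev Q b j = \sum_(x <- s) x.1 * ev Q x.2 j.

Lemma meval_sumZ (K : fieldType) n (s : seq (K * 'X_{1..n})) (v : 'I_n -> K) :
  (\sum_(x <- s) x.1 *: ('X_[x.2] : {mpoly K[n]})).@[v] = \sum_(x <- s) x.1 * ('X_[x.2] : {mpoly K[n]}).@[v].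
Proof.
elim: s => [|x s IH]; first by rewrite !big_nil meval0.
by rewrite !big_cons mevalD mevalZ IH.
Qed.

Lemma L1a (K : fieldType) n m (le : rel 'X_{1..n}) (Q : 'I_m -> 'I_n -> K) b :
  reflexive le -> inspan le Q b ->
  in_initial_ideal le (vanishing_ideal (fun x => exists j, x = Q j)) 'X_[b].
Proof.
move=> hrefl [s [hs hsum]].
pose F : {mpoly K[n]} := 'X_[b] - \sum_(x <- s) x.1 *: 'X_[x.2].
have hcoef : forall m', m' != b -> F@_m' != 0 -> has (fun x => x.2 == m') s.
  move=> m' hm' hF; apply/negPn/negP => hn; move: hF.
  have hbm : (b == m') = false by apply/negbTE; rewrite eq_sym.
  rewrite /F mcoeffB mcoeffX hbm sub0r raddf_sum oppr_eq0.
  rewrite big1_seq ?eqxx // => x /= hx.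
  rewrite mcoeffZ mcoeffX; case: eqP => [e|]; last by rewrite mulr0.
  by case/negP: hn; apply/hasP; exists x => //; rewrite e.
have hFb : F@_b = 1.
  rewrite /F mcoeffB mcoeffX eqxx raddf_sum big1_seq ?subr0 // => x /= hx.
  by rewrite mcoeffZ mcoeffX; case/andP: (hs x hx) => _ /negbTE ->; rewrite mulr0.
exists [:: (1, b)]; split; last by rewrite big_seq1 mul1r.
move=> gm; rewrite inE => /eqP -> /=; exists F; split.
- move=> x [j ->]; rewrite /F mevalB meval_sumZ.
  by rewrite -/(ev Q b j) hsum subrr.
- by apply/eqP => h; move: hFb; rewrite h mcoeff0 => /eqP; rewrite eq_sym oner_eq0.
- rewrite /is_lead mcoeff_msupp hFb oner_neq0 /=; apply/allP => m' hm'.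
  case: (eqVneq m' b) => [->|hne] //.
  rewrite mcoeff_msupp in hm'.
  case/hasP: (hcoef m' hne hm') => x hx /eqP <-.
  by case/andP: (hs x hx).
Qed.

Lemma L1b (K : fieldType) n m (le : rel 'X_{1..n}) (Q : 'I_m -> 'I_n -> K) b :
  (forall a b c : 'X_{1..n}, le a b -> le (a + c)%MM (b + c)%MM) ->
  in_initial_ideal le (vanishing_ideal (fun x => exists j, x = Q j)) 'X_[b] ->
  inspan le Q b.
Proof.
move=> hcomp [s [hs hsum]].
have h1 : ('X_[b] : {mpoly K[n]})@_b = 1 by rewrite mcoeffX eqxx.
case: (boolP (has (fun gm : {mpoly K[n]} * 'X_{1..n} => (gm.1 * 'X_[gm.2])@_b != 0) s)) => [/hasP [gm hgm hnz] | hn];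
  last first.
  move: h1; rewrite hsum raddf_sum big1_seq.
    by move/eqP; rewrite eq_sym oner_eq0.
  move=> gm /= hgm; apply/eqP; apply/negPn/negP => h.
  by case/negP: hn; apply/hasP; exists gm.
rewrite -mcoeff_msupp (perm_mem (msuppMX _ _)) in hnz.
case/mapP: hnz => e he hbe.
case: (hs gm hgm) => f [hfI hf0 /andP [hc hall]].
set c := gm.2 in hbe hc hall.
have hfc : f@_c != 0 by rewrite -mcoeff_msupp.
exists [seq (- f@_m' / f@_c, (m' + e)%MM) | m' <- [seq m' <- msupp f | m' != c]].
split.
  move=> x /mapP [m' hm' ->] /=; rewrite mem_filter in hm'; case/andP: hm' => hne hm'.
  rewrite hbe; apply/andP; split.
    by apply: hcomp; exact: (allP hall m' hm').
  by rewrite eqm_add2r.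
move=> j; rewrite big_map big_filter.
have hf : f.@[Q j] = 0 by apply: hfI; exists j.
rewrite {1}(mpolyE f) raddf_sum /= (bigD1_seq c) ?msupp_uniq //= in hf.
rewrite /ev hbe mpolyXD mevalM.
have -> : ('X_[c] : {mpoly K[n]}).@[Q j] =
    - (f@_c)^-1 * \sum_(i <- msupp f | i != c) (f@_i *: 'X_[i]).@[Q j].
  apply: (mulfI hfc); rewrite mulrA mulrN mulfV // mulN1r -mevalZ.
  by apply/eqP; rewrite -addr_eq0 hf.
rewrite -mulrA mulr_suml mulr_sumr; apply: eq_bigr => i _.
rewrite mevalZ mpolyXD mevalM /=; ring.
Qed.

Lemma combine (K : fieldType) m (T : eqType) (w : T -> 'I_m -> K) (G : T -> Prop)
  (s0 : seq (K * T)) :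
  (forall x, x \in s0 -> exists s : seq (K * T), (forall y, y \in s -> G y.2) /\
     forall j, w x.2 j = \sum_(y <- s) y.1 * w y.2 j) ->
  exists s : seq (K * T), (forall y, y \in s -> G y.2) /\
     forall j, \sum_(x <- s0) x.1 * w x.2 j = \sum_(y <- s) y.1 * w y.2 j.
Proof.
elim: s0 => [|x s0 IH] H.
  by exists [::]; split => // j; rewrite !big_nil.
case: (H x (mem_head _ _)) => sx [hx1 hx2].
case: IH => [y hy|s [hs1 hs2]]; first by apply: H; rewrite inE hy orbT.
exists ([seq (x.1 * y.1, y.2) | y <- sx] ++ s); split.
  move=> y; rewrite mem_cat => /orP [/mapP [z hz ->]|hy]; first exact: (hx1 z hz).
  exact: hs1.
move=> j; rewrite big_cons big_cat big_map hs2 hx2 mulr_sumr; congr (_ + _).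
by apply: eq_bigr => y _; rewrite mulrA.
Qed.

Lemma reduce (K : fieldType) n m (le : rel 'X_{1..n}) (P : 'I_m -> 'I_n -> K)
  (Hmo : monomial_order le) c :
  exists s : seq (K * 'X_{1..n}), (forall y, y \in s ->
     standard_monomial le (vanishing_ideal (fun x => exists j, x = P j)) y.2 /\ le y.2 c) /\
   forall j, ev P c j = \sum_(y <- s) y.1 * ev P y.2 j.
Proof.
have Hmo' := Hmo; move: Hmo' => [[Hrefl Hanti Htrans Htot] [Hcomp H0]].
elim/(well_founded_induction (mo_wf Hmo)): c => c IH.
case: (classic (standard_monomial le (vanishing_ideal (fun x => exists j, x = P j)) c)) => hst.
  exists [:: (1, c)]; split; last by move=> j; rewrite big_seq1 mul1r.
  by move=> y; rewrite inE => /eqP -> /=; split.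
have hin := NNPP _ hst.
case: (L1b Hcomp hin) => s0 [hs0 hsum].
case: (combine (w := ev P)
   (G := fun y => standard_monomial le (vanishing_ideal (fun x => exists j, x = P j)) y /\ le y c) (s0 := s0))
   => [x hx|s [hs hsum']].
  case: (IH x.2 (hs0 x hx)) => s [h1 h2]; exists s; split => // y hy.
  case: (h1 y hy) => st lyx; split => //; case/andP: (hs0 x hx) => hle _.
  exact: Htrans lyx hle.
by exists s; split => // j; rewrite hsum hsum'.
Qed.

Theorem mainTheorem14 (K : fieldType) (n m : nat) (le : rel 'X_{1..n})
    (P : 'I_m -> 'I_n -> K) (E : {set 'I_n}) :
  monomial_order le ->
  injective P ->
  (forall b : 'X_{1..n},
     standard_monomial le (vanishing_ideal (fun x => exists j, x = P j)) b ->
     forall i : 'I_n, (0 < b i)%N -> i \in E) ->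
  (#|E| <= m - 1)%N -> (0 < m)%N -> (#|E| <= n)%N ->
  \rank (eval_matrix E P) = #|E| ->
  forall b : 'X_{1..n},
    standard_monomial le (vanishing_ideal (fun x => exists j, x = P j)) b <->
    exists2 b' : 'X_{1..#|E|},
      standard_monomial (induced_order le)
        (vanishing_ideal (fun y => exists j, y = proj_pt (E:=E) (P j))) b'
      & b = emb_mon b'.
Proof.
move=> Hmo _ Hsupp _ _ _ _ b.
have Hmo' := Hmo; move: Hmo' => [[Hrefl Hanti Htrans Htot] [Hcomp H0]].
pose Q' := fun j => proj_pt (E:=E) (P j).
have hrefl' : reflexive (induced_order (E:=E) le) by move=> a; apply: Hrefl.
have hcomp' : forall a b c : 'X_{1..#|E|}, induced_order le a b ->
    induced_order le (a + c)%MM (b + c)%MM.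
  by move=> a b' c; rewrite /induced_order !embD; apply: Hcomp.
have hevQ : forall c j, ev Q' c j = ev P (emb_mon c) j.
  by move=> c j; rewrite /ev eval_emb.
have forward : forall b', inspan (induced_order le) Q' b' -> inspan le P (emb_mon b').
  move=> b' [s' [hs' hsum']].
  exists [seq (x.1, emb_mon x.2) | x <- s']; split.
    move=> y /mapP [x hx ->] /=; rewrite (inj_eq (@emb_inj n E)); exact: hs' x hx.
  move=> j; rewrite -hevQ hsum' big_map; apply: eq_bigr => x _.
  by rewrite hevQ.
have backward : forall b', inspan le P (emb_mon b') -> inspan (induced_order le) Q' b'.
  move=> b' [s0 [hs0 hsum]].
  case: (combine (w := ev P)
   (G := fun d => standard_monomial le (vanishing_ideal (fun x => exists j, x = P j)) d
                  /\ le d (emb_mon b') /\ d != emb_mon b') (s0 := s0)) => [x hx|s [hs hsum']].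
    case/andP: (hs0 x hx) => hle hne.
    case: (reduce P Hmo x.2) => s [h1 h2]; exists s; split => // y hy.
    case: (h1 y hy) => st lyx; split => //; split; first exact: Htrans lyx hle.
    apply/negP => /eqP he; have hle' : le x.2 y.2 by rewrite he.
    by move: hne; rewrite -he (Hanti x.2 y.2 (introT andP (conj hle' lyx))) eqxx.
  exists [seq (y.1, unemb E y.2) | y <- s]; split.
    move=> z /mapP [y hy ->] /=.
    case: (hs y hy) => st [hle hne].
    rewrite /induced_order unembK; last exact: Hsupp st.
    rewrite hle /=; apply/negP => /eqP he; move: hne.
    by rewrite -he unembK ?eqxx //; exact: Hsupp st.
  move=> j; rewrite hevQ hsum hsum' big_map; apply: eq_big_seq => y hy /=.
  rewrite hevQ unembK //; case: (hs y hy) => st _; exact: Hsupp st.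
split.
  move=> hst; have hE := Hsupp b hst.
  exists (unemb E b); last by rewrite unembK.
  move=> hin'; apply: hst.
  have := forward _ (L1b hcomp' hin'); rewrite unembK //.
  exact: L1a.
case=> b' hst' ->; move=> hin; apply: hst'.
exact: (L1a hrefl' (backward _ (L1b Hcomp hin))).
Qed.
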